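(* Let $G$ be a connected graph with $n\ge 2$ vertices and let $\varepsilon\ge 0$. If $G$ has at least $\varepsilon n$ bad vertices, then the graphic TSP cost of $G$ is at least $(1+\varepsilon)n-2$.
   Context: A vertex is bad if it has degree $1$, or it has degree $2$ and is an articulation point (a vertex whose removal increases the number of connected components). For a connected unweighted undirected graph $G=(V,E)$ with $n\ge 2$ vertices, the graphic TSP cost is $\min \sum_{i=1}^{n} d_G(v_i,v_{i+1})$ over cyclic orderings $(v_1,\dots,v_n)$ of $V$ ($v_{n+1}=v_1$), where $d_G$ is shortest-path distance. *)

(* Defs.v *)
From mathcomp Require Import all_boot all_order all_algebra.
From mathcomp Require Import fingroup perm.
Set Implicit Arguments. Unset Strict Implicit. Unset Printing Implicit Defensive.

(* A simple undirected graph: vertex set T (a finType), adjacency e : rel T,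
   assumed symmetric and irreflexive in the theorem statement. *)

Section Graph.
Variables (T : finType) (e : rel T).

Definition induced_rel (A : {set T}) : rel T :=
  [rel y z | [&& y \in A, z \in A & e y z]].

Definition ncomp (A : {set T}) : nat := n_comp (induced_rel A) (mem A).

Definition connected_graph : Prop := forall x y : T, connect e x y.

Definition degree (x : T) : nat := #|[set y | e x y]|.

Definition articulation (x : T) : bool :=
  ncomp [set: T] < ncomp [set~ x].

Definition bad (x : T) : bool :=
  (degree x == 1) || ((degree x == 2) && articulation x).

Definition bad_set : {set T} := [set x | bad x].

Definition walk_len (x y : T) (k : nat) : bool :=
  [exists p : k.-tuple T, path e x p && (last x p == y)].

(* shortest-path distance; in a connected graph some walk of length < #|T|
   exists, so this is the least such length *)
Definition dist (x y : T) : nat := find (walk_len x y) (iota 0 #|T|).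

Definition cycle_cost (s : seq T) : nat :=
  \sum_(p <- zip s (rot 1 s)) dist p.1 p.2.

Definition ordering (s : {perm T}) : seq T := [seq s x | x <- enum T].

Definition gtsp : nat :=
  \big[minn/cycle_cost (ordering 1)]_(s : {perm T}) cycle_cost (ordering s).

End Graph.

(* Main.v *)
Require Import Defs.
From mathcomp Require Import all_boot all_order all_algebra.
From mathcomp Require Import zify.
From mathcomp Require Import fingroup perm.
Set Implicit Arguments. Unset Strict Implicit. Unset Printing Implicit Defensive.

Section Work.
Variables (T : finType) (e : rel T).
Hypotheses (e_sym : symmetric e) (e_irr : irreflexive e) (conn : connected_graph e).

Lemma dist_walk x y : exists p, [/\ path e x p, last x p = y & size p = dist e x y].
Proof.
have hw : has (walk_len e x y) (iota 0 #|T|).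
  have /connectP [p pp ->] := conn x y.
  case: (shortenP pp) => p' pp' up' _.
  apply/hasP; exists (size p').
    rewrite mem_iota add0n /=.
    have /card_uniqP h := up'.
    by have := max_card (mem (x :: p')); rewrite h /=.
  by apply/existsP; exists (in_tuple p'); rewrite /= pp' eqxx.
have hf : find (walk_len e x y) (iota 0 #|T|) < #|T| by rewrite -[X in _ < X](size_iota 0 #|T|) -has_find.
have := nth_find 0 hw; rewrite nth_iota // add0n => /existsP [t /andP [pt /eqP lt]].
by exists t; rewrite size_tuple.
Qed.

Lemma walk_seq x L : exists w, [/\ path e x w, last x w = last x L,
  size w = \sum_(p <- zip (x :: L) L) dist e p.1 p.2 & {subset L <= x :: w}].
Proof.
elim: L x => [|y L IH] x; first by exists [::]; rewrite big_nil.
have [p1 [pp1 lp1 sp1]] := dist_walk x y.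
have [w [pw lw sw cw]] := IH y.
exists (p1 ++ w); split.
- by rewrite cat_path pp1 lp1.
- by rewrite last_cat lp1 lw.
- by rewrite size_cat /= big_cons sp1 sw.
move=> z; rewrite inE => /orP [/eqP -> | zL].
  by rewrite -lp1 -cat_cons mem_cat mem_last.
have : z \in y :: w by apply: cw.

rewrite inE => /orP [/eqP ->|zw].
  by rewrite -lp1 -cat_cons mem_cat mem_last.
by rewrite -cat_cons mem_cat zw orbT.
Qed.

Lemma zip_rcons_cycle (x z : T) L :
  zip (x :: L) (rcons L z) = rcons (zip (x :: L) L) (last x L, z).
Proof. by elim: L x => [|y L IH] x //=; rewrite IH. Qed.

Lemma cycle_walk (L : seq T) x : x \in L ->
  exists x0 w, [/\ path e x0 w, last x0 w = x0,
     size w = cycle_cost e L & {subset L <= x0 :: w}].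
Proof.
case: L => [//|x0 L] _.
have [w [pw lw sw cw]] := walk_seq x0 L.
have [p2 [pp2 lp2 sp2]] := dist_walk (last x0 L) x0.
exists x0, (w ++ p2); split.
- by rewrite cat_path pw lw.
- by rewrite last_cat lw.
- rewrite /cycle_cost rot1_cons zip_rcons_cycle -cats1 big_cat big_seq1 size_cat /=.
  by rewrite sw sp2.
move=> z; rewrite inE => /orP [/eqP ->|zL]; first by rewrite mem_head.
have := cw z zL; rewrite !inE mem_cat => /orP [->|->] //.
by rewrite orbT.
Qed.

Lemma nat_cross (f : nat -> bool) i k : i <= k -> f i -> ~~ f k ->
  exists2 j, j < k & f j && ~~ f j.+1.
Proof.
elim: k => [|k IH]; first by rewrite leqn0 => /eqP -> ->.
rewrite leq_eqVlt => /orP [/eqP -> -> //|ik fi nfk].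
case fk: (f k); first by exists k => //; rewrite fk nfk.
by have [j jk hj] := IH ik fi (negbT fk); exists j => //; apply: ltnW.
Qed.

Local Notation R v := (induced_rel e [set~ v]).

Lemma induced_sym A : symmetric (induced_rel e A).
Proof. by move=> y z; rewrite /induced_rel /= e_sym andbCA. Qed.

Lemma induced_csym A : connect_sym (induced_rel e A).
Proof. exact/sym_connect_sym/induced_sym. Qed.

Lemma reach_nbr v p z : path e z p -> last z p = v -> z != v ->
  exists2 q, e q v & connect (R v) z q.
Proof.
elim: p z => [|y p IH] z /=; first by move=> _ -> /eqP.
case/andP => ezy pp lp zv.
case yv: (y == v); first by exists z => //; rewrite -(eqP yv).
have [q eq cq] := IH y pp lp (negbT yv).
exists q => //; apply: connect_trans cq; apply: connect1.
by rewrite /induced_rel /= !in_setC1 zv yv ezy.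
Qed.

Lemma connR_ne v a z : a != v -> connect (R v) a z -> z != v.
Proof.
move=> av /connectP [p pp ->].
have : all (fun u => u != v) p.
  elim: p a av pp {1 3}a => [//|y p IH] a av /= /andP [hy pp] _.
  move: hy; rewrite /induced_rel /= !in_setC1 => /and3P [_ yv _]; rewrite yv /=.
  exact: (IH y yv pp y).
move/allP => hall; have := mem_last a p; rewrite inE => /orP [/eqP -> //|].
exact: hall.
Qed.

Lemma ncompT_pos (x : T) : 0 < ncomp e [set: T].
Proof.
apply/card_gt0P; exists (fingraph.root (induced_rel e [set: T]) x).
by rewrite !inE /= andbT; apply: roots_root; exact: induced_csym.
Qed.

Lemma ncomp_le1 v a : (forall z, z != v -> connect (R v) z a) -> ncomp e [set~ v] <= 1.
Proof.
move=> H; rewrite /ncomp.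
have -> : 1 = #|pred1 (fingraph.root (R v) a)| by rewrite card1.
apply: subset_leq_card; apply/subsetP => r; rewrite !inE /= => /andP [/eqP rr rv].
rewrite -{1}rr (root_connect (induced_csym _)); apply: H; exact: rv.
Qed.

Lemma artic_split v a b : articulation e v -> e v a -> e v b ->
  (forall q, e v q -> q = a \/ q = b) -> ~~ connect (R v) a b.
Proof.
move=> art ea eb nb; apply/negP => cab.
have av : a != v by apply/negP => /eqP h; move: ea; rewrite h e_irr.
have : ncomp e [set~ v] <= 1.
  apply: (ncomp_le1 (a := a)) => z zv.
  have /connectP [p pp lp] := conn z v.
  have [q eqv czq] := reach_nbr pp (esym lp) zv.
  apply: connect_trans czq _.
  rewrite e_sym in eqv; case: (nb q eqv) => ->; first exact: connect0.
  by rewrite induced_csym.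
have := ncompT_pos v; move: art; rewrite /articulation; lia.
Qed.

Section Walk.
Variables (x0 : T) (w : seq T).
Hypotheses (pw : path e x0 w) (lw : last x0 w = x0) (cov : forall z, z \in x0 :: w).
Local Notation W := (x0 :: w).
Local Notation C := (size w).

Lemma step_edge j : j < C -> e (nth x0 W j) (nth x0 w j).
Proof. by move=> jC; move: pw => /(pathP x0); apply. Qed.

Lemma nthC : nth x0 W C = x0.
Proof. by have := nth_last x0 W; rewrite /= lw. Qed.

Lemma cross (P : pred T) i k : i <= C -> k <= C -> P (nth x0 W i) -> ~~ P (nth x0 W k) ->
  exists2 j, j < C & P (nth x0 W j) && ~~ P (nth x0 w j).
Proof.
move=> iC kC Pi Pk; pose f j := P (nth x0 W j).
have H : forall a b, a <= b -> b <= C -> f a -> ~~ f b ->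
    exists2 j, j < C & P (nth x0 W j) && ~~ P (nth x0 w j).
  move=> a b ab bC fa fb; have [j jb hj] := nat_cross ab fa fb.
  by exists j => //; apply: leq_trans bC.
case: (leqP i k) => ik; first exact: H ik kC Pi Pk.
case f0: (f 0).
  by apply: (H 0 k) => //; rewrite f0.
by apply: (H i C) => //; rewrite /f nthC; rewrite /f /= in f0; rewrite f0.
Qed.

Lemma pos_of z : exists2 i, i <= C & nth x0 W i = z.
Proof.
exists (index z W); last exact: nth_index.
by have := index_mem z W; rewrite cov /= ltnS.
Qed.

Lemma two_way (S : pred T) x y : S x -> ~~ S y ->
  (forall a b, e a b -> S a -> ~~ S b -> a = x /\ b = y) ->
  (exists2 j, j < C & (nth x0 W j == x) && (nth x0 w j == y)) /\
  (exists2 j, j < C & (nth x0 W j == y) && (nth x0 w j == x)).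
Proof.
move=> Sx Sy H.
have [ix ixC nx] := pos_of x; have [iy iyC ny] := pos_of y.
split.
  have [j jC /andP [h1 h2]] := @cross S ix iy ixC iyC ltac:(by rewrite nx) ltac:(by rewrite ny).
  have [h3 h4] := H _ _ (step_edge jC) h1 h2; exists j => //; by rewrite h3 h4 !eqxx.
have [j jC /andP [h1 h2]] := @cross (predC S) iy ix iyC ixC ltac:(by rewrite ny) ltac:(by rewrite /= nx negbK).
rewrite /= negbK in h1 h2.
have ee : e (nth x0 w j) (nth x0 W j) by rewrite e_sym; apply: step_edge.
have [h3 h4] := H _ _ ee h2 h1; exists j => //; by rewrite h3 h4 !eqxx.
Qed.

Definition old i := index (nth x0 w i) W <= i.
Definition pv v := nth x0 W (index v w).
Definition M v i := ((nth x0 W i == pv v) && (nth x0 w i == v)) ||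
                    ((nth x0 W i == v) && (nth x0 w i == pv v)).

Lemma in_w v : v != x0 -> v \in w.
Proof. by move=> vx; have := cov v; rewrite inE (negbTE vx). Qed.

Lemma indexW v : v != x0 -> index v W = (index v w).+1.
Proof. by move=> vx; rewrite /index /= eq_sym (negbTE vx). Qed.

Lemma idx_pv u v : u != x0 -> v != x0 -> pv u = v -> index v w < index u w.
Proof.
move=> ux vx h; rewrite -ltnS -indexW // -h /pv.
by apply: index_nth; rewrite /= ltnS; apply: ltnW; rewrite index_mem in_w.
Qed.

Lemma M_inj u1 u2 i : u1 != x0 -> u2 != x0 -> M u1 i -> M u2 i -> u1 = u2.
Proof.
move=> u1x u2x.
case/orP => /andP [/eqP s1 /eqP d1]; case/orP => /andP [/eqP s2 /eqP d2].
- by rewrite -d1 -d2.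
- have h1 : pv u1 = u2 by rewrite -s1 -s2.
  have h2 : pv u2 = u1 by rewrite -d1 -d2.
  have := idx_pv u1x u2x h1; have := idx_pv u2x u1x h2.
  by move=> a b; have := ltn_trans a b; rewrite ltnn.
- have h1 : pv u1 = u2 by rewrite -d1 -d2.
  have h2 : pv u2 = u1 by rewrite -s1 -s2.
  have := idx_pv u1x u2x h1; have := idx_pv u2x u1x h2.
  by move=> a b; have := ltn_trans a b; rewrite ltnn.
- by rewrite -s1 -s2.
Qed.

Lemma old_exists v :
  (exists2 j, j < C & (nth x0 W j == pv v) && (nth x0 w j == v)) ->
  (exists2 j, j < C & (nth x0 W j == v) && (nth x0 w j == pv v)) ->
  exists i : 'I_C, old i && M v i.
Proof.
move=> [j1 j1C /andP [/eqP s1 /eqP d1]] [j2 j2C /andP [/eqP s2 /eqP d2]].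
case: (leqP j1 j2) => j12.
  exists (Ordinal j2C); rewrite /old /M; change (nat_of_ord (Ordinal j2C)) with j2.
  rewrite s2 d2 !eqxx orbT andbT.
  rewrite -s1; apply: leq_trans j12; apply: index_nth.
  by rewrite ltnS ltnW.
exists (Ordinal j1C); rewrite /old /M; change (nat_of_ord (Ordinal j1C)) with j1.
rewrite s1 d1 !eqxx orTb andbT.
rewrite -s2; apply: (leq_trans _ (ltnW j12)); apply: index_nth.
by rewrite ltnS ltnW.
Qed.

Definition f2 v : nat := if [pick i : 'I_C | old i && M v i] is Some i then val i else 0.

Lemma count_bound (B : {set T}) :
  (forall v, v \in B -> v != x0 -> exists i : 'I_C, old i && M v i) ->
  #|T| + #|B| <= C + 2.
Proof.
move=> hB.
pose s1 := [seq index v w | v <- enum [set~ x0]].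
pose s2 := [seq f2 v | v <- enum (B :\ x0)].
have f2P v : v \in B :\ x0 -> exists2 i : 'I_C, f2 v = val i & old i && M v i.
  rewrite in_setD1 => /andP [vx vB]; rewrite /f2; case: pickP => [i hi|h0].
    by exists i.
  by have [i hi] := hB v vB vx; rewrite h0 in hi.
have u1 : uniq s1.
  rewrite map_inj_in_uniq ?enum_uniq // => a b; rewrite !mem_enum !in_setC1 => ax bx h.
  by rewrite -(nth_index x0 (in_w ax)) h nth_index // in_w.
have u2 : uniq s2.
  rewrite map_inj_in_uniq ?enum_uniq // => a b; rewrite !mem_enum => ha hb h.
  have [i fi /andP [_ Mi]] := f2P a ha; have [j fj /andP [_ Mj]] := f2P b hb.
  have ij : i = j by apply: val_inj; rewrite -fi -fj.
  move: ha hb; rewrite !in_setD1 => /andP [ax _] /andP [bx _].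
  by apply: (M_inj ax bx Mi); rewrite ij.
have d12 : ~~ has (mem s1) s2.
  apply/hasPn => k /mapP [u hu ->]; rewrite mem_enum in hu.
  have [i fi /andP [oi _]] := f2P u hu; rewrite fi.
  apply/mapP => [[v hv hiv]]; rewrite mem_enum in_setC1 in hv.
  move: oi; rewrite /old hiv nth_index ?in_w // indexW //.
  by rewrite ltnn.
have us : uniq (s1 ++ s2) by rewrite cat_uniq u1 u2 d12.
have sub : {subset s1 ++ s2 <= iota 0 C}.
  move=> k; rewrite mem_cat mem_iota add0n /= => /orP [/mapP [v hv ->]|/mapP [u hu ->]].
    by rewrite index_mem in_w // -in_setC1 -mem_enum.
  by rewrite mem_enum in hu; have [i -> _] := f2P u hu; apply: ltn_ord.
have := uniq_leq_size us sub; rewrite size_iota size_cat !size_map -!cardE cardsC1.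
have := cardsD1 x0 B; have : 0 < #|T| by apply/card_gt0P; exists x0.
case: (x0 \in B) => /=; lia.
Qed.
Lemma pv_edge v : v != x0 -> e (pv v) v.
Proof.
move=> vx; have := @step_edge (index v w).
by rewrite /pv (nth_index x0 (in_w vx)) index_mem (in_w vx); apply.
Qed.

Lemma pv_ne v : v != x0 -> pv v != v.
Proof. by move=> vx; apply/negP => /eqP h; have := pv_edge vx; rewrite h e_irr. Qed.

Lemma bad_old v : v \in bad_set e -> v != x0 -> exists i : 'I_C, old i && M v i.
Proof.
move=> + vx; rewrite inE /bad /degree => /orP [d1 | /andP [d2 art]].
  have /cards1P [u hu] := d1.
  have nb q : e v q -> q = u.
    move=> evq; have : q \in [set y | e v y] by rewrite inE.
    by rewrite hu inE => /eqP.
  have pu : pv v = u by apply: nb; rewrite e_sym; apply: pv_edge.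
  have [h1 h2] := @two_way (pred1 v) v (pv v) (eqxx v) (pv_ne vx)
    (fun a b eab av _ => conj (eqP av) (etrans (nb b ltac:(by rewrite -(eqP av))) (esym pu))).
  exact: old_exists h2 h1.
have /cards2P [a [b [ab hN]]] := d2.
set a0 := pv v.
have ea0 : e v a0 by rewrite e_sym; apply: pv_edge.
have nb q : e v q -> q = a \/ q = b.
  move=> evq; have : q \in [set y | e v y] by rewrite inE.
  by rewrite hN !inE => /orP [/eqP ->|/eqP ->]; [left|right].
have ea : e v a.
  have : a \in [set y | e v y] by rewrite hN !inE eqxx.
  by rewrite inE.
have eb : e v b.
  have : b \in [set y | e v y] by rewrite hN !inE eqxx orbT.
  by rewrite inE.
have [b' [eb' nb']] : exists b', e v b' /\ forall q, e v q -> q = a0 \/ q = b'.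
  case: (nb _ ea0) => ->.
    by exists b; split=> // q /nb [->|->]; first [by left | by right].
  by exists a; split=> // q /nb [->|->]; first [by left | by right].
have ns := artic_split art ea0 eb' nb'.
have a0v : a0 != v by apply: pv_ne.
have nSv : ~~ connect (R v) a0 v by apply/negP => /(connR_ne a0v); rewrite eqxx.
have [|h1 h2] := @two_way (connect (R v) a0) a0 v (connect0 _ _) nSv; last first.
  exact: old_exists h1 h2.
move=> c d ecd Sc nSd.
have dv : d = v.
  apply/eqP; apply: contraNT nSd => dv.
  apply: (connect_trans Sc (connect1 _)).
  by rewrite /induced_rel /= !in_setC1 dv (connR_ne a0v Sc) ecd.
split=> //; move: ecd; rewrite dv e_sym => /nb' [//|cb].
by move: Sc; rewrite cb (negbTE ns).
Qed.
End Walk.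

Lemma in_ordering (s : {perm T}) z : z \in ordering s.
Proof. by apply/mapP; exists (s^-1 z)%g; rewrite ?mem_enum ?permKV. Qed.

Lemma cost_bound (s : {perm T}) (z : T) :
  #|T| + #|bad_set e| <= cycle_cost e (ordering s) + 2.
Proof.
have [x0 [w [pw lw sw cw]]] := cycle_walk (in_ordering s z).
have cov : forall y, y \in x0 :: w by move=> y; apply/cw/in_ordering.
rewrite -sw; apply: (count_bound pw cov) => v; exact: bad_old.
Qed.

Lemma gtsp_bound (z : T) : #|T| + #|bad_set e| <= gtsp e + 2.
Proof.
rewrite /gtsp; apply: (big_ind (fun m => #|T| + #|bad_set e| <= m + 2)).
- exact: cost_bound.
- by move=> a b ha hb; rewrite /minn; case: ifP.
by move=> s _; apply: cost_bound.
Qed.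
End Work.

Unset Implicit Arguments. Set Strict Implicit. Set Printing Implicit Defensive.
Import Order.TTheory GRing.Theory Num.Theory.
Local Open Scope ring_scope.
From mathcomp Require Import lra.

Theorem mainTheorem12 (R : realFieldType) (T : finType) (e : rel T)
    (e_sym : symmetric e) (e_irr : irreflexive e)
    (conn : connected_graph e) (n2 : (2 <= #|T|)%N)
    (eps : R) (eps0 : 0 <= eps)
    (hbad : eps * #|T|%:R <= #|bad_set e|%:R) :
  (1 + eps) * #|T|%:R - 2 <= (gtsp e)%:R.
Proof.
have /card_gt0P [z _] : (0 < #|T|)%N by apply: leq_trans n2.
have h := gtsp_bound e_sym e_irr conn z.
have : (#|T| + #|bad_set e|)%:R <= ((gtsp e) + 2)%:R :> R by rewrite ler_nat.
rewrite !natrD; lra.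
Qed.
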